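(* For a positive integer $N$ and integers $m,\ell$ with $m\equiv \ell\pmod 2$, define \[ S_{m,\ell}^{N}(q):=\frac{q^{-\frac{1}{8}+\frac{(\ell+1)^2}{4(N+2)}-\frac{m^2}{4N}}}{J_{1}^3}\, f_{1,1+N,1}\big(q^{1+\frac{1}{2}(m+\ell)},q^{1-\frac{1}{2}(m-\ell)},q\big). \] Then $S_{m,\ell}^{N}(q)=S_{-m,\ell}^{N}(q)$, $S_{m,\ell}^{N}(q)=S_{2N-m,\ell}^{N}(q)$, and $S_{m,\ell}^{N}(q)=S_{N-m,N-\ell}^{N}(q)$.
   Context: Let $q=e^{2\pi i\tau}$ with $\operatorname{Im}\tau>0$, and for real $\alpha$ put $q^{\alpha}:=e^{2\pi i\alpha\tau}$. $J_1:=\prod_{i\ge1}(1-q^i)$. For positive integers $a,b,c$ and $x,y\in\mathbb{C}^*$, the Hecke-type double-sum is $f_{a,b,c}(x,y,q):=\Big(\sum_{r,s\ge0}-\sum_{r,s<0}\Big)(-1)^{r+s}x^ry^sq^{a\binom{r}{2}+brs+c\binom{s}{2}}$. *)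

(* Defs.v *)
From Stdlib Require Import Reals ZArith.
From Coquelicot Require Import Coquelicot.
Open Scope R_scope.

Definition cexp (z : C) : C :=
  (exp (fst z) * cos (snd z), exp (fst z) * sin (snd z)).

(* q^alpha := e^{2 pi i alpha tau}, for real alpha *)
Definition qpow (tau : C) (alpha : R) : C :=
  cexp (Cmult (0, 2 * PI * alpha) tau).

Fixpoint Cpow (z : C) (n : nat) : C :=
  match n with O => RtoC 1 | S n => Cmult z (Cpow z n) end.

Definition Czpow (z : C) (k : Z) : C :=
  match k with
  | Z0 => RtoC 1
  | Zpos p => Cpow z (Pos.to_nat p)
  | Zneg p => Cinv (Cpow z (Pos.to_nat p))
  end.

Fixpoint Csum (n : nat) (u : nat -> C) : C :=
  match n with O => RtoC 0 | S n => Cplus (Csum n u) (u n) end.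
Fixpoint Cprod (n : nat) (u : nat -> C) : C :=
  match n with O => RtoC 1 | S n => Cmult (Cprod n u) (u n) end.

Definition Clim (u : nat -> C) : C :=
  (real (Lim_seq (fun n => fst (u n))), real (Lim_seq (fun n => snd (u n)))).

Definition J1 (tau : C) : C :=
  Clim (fun n => Cprod n (fun i =>
          Cminus (RtoC 1) (Czpow (qpow tau 1) (Z.of_nat i + 1)))).

Definition hecke_term (a b c : Z) (x y q : C) (r s : Z) : C :=
  Cmult (Czpow (RtoC (-1)) (r + s))
   (Cmult (Czpow x r)
    (Cmult (Czpow y s)
     (Czpow q (a * (r * (r - 1) / 2) + b * r * s + c * (s * (s - 1) / 2))%Z))).

(* f_{a,b,c}(x,y,q) = (sum_{r,s>=0} - sum_{r,s<0}) term; the (absolutely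
   convergent) double sums are evaluated as limits of square partial sums. *)
Definition hecke_f (a b c : Z) (x y q : C) : C :=
  Clim (fun M =>
    Cminus
      (Csum M (fun r => Csum M (fun s =>
          hecke_term a b c x y q (Z.of_nat r) (Z.of_nat s))))
      (Csum M (fun r => Csum M (fun s =>
          hecke_term a b c x y q (- Z.of_nat r - 1) (- Z.of_nat s - 1))))).

Definition S_fun (N : nat) (m l : Z) (tau : C) : C :=
  Cmult
    (Cdiv (qpow tau (- / 8 + (IZR l + 1) ^ 2 / (4 * (INR N + 2))
                      - (IZR m) ^ 2 / (4 * INR N)))
          (Cpow (J1 tau) 3))
    (hecke_f 1 (1 + Z.of_nat N) 1
       (qpow tau (1 + (IZR m + IZR l) / 2))
       (qpow tau (1 - (IZR m - IZR l) / 2))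
       (qpow tau 1)).

(* Main.v *)
Require Import Defs.
From Stdlib Require Import Reals ZArith Lia Lra.
From Coquelicot Require Import Coquelicot.
Open Scope R_scope.


Lemma cexp_add (z w : C) : cexp (Cplus z w) = Cmult (cexp z) (cexp w).
Proof.
  destruct z as [a b], w as [c d]. unfold cexp, Cplus, Cmult; simpl.
  rewrite exp_plus, cos_plus, sin_plus. f_equal; ring.
Qed.

Lemma qpow_add tau a b : qpow tau (a + b) = Cmult (qpow tau a) (qpow tau b).
Proof.
  unfold qpow. rewrite <- cexp_add. f_equal.
  destruct tau as [x y]. unfold Cmult, Cplus; simpl. f_equal; ring.
Qed.

Lemma qpow_0 tau : qpow tau 0 = RtoC 1.
Proof.
  unfold qpow, cexp. destruct tau as [x y]; simpl.
  replace (0 * x - 2 * PI * 0 * y) with 0 by ring.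
  replace (0 * y + 2 * PI * 0 * x) with 0 by ring.
  rewrite exp_0, cos_0, sin_0. unfold RtoC. f_equal; ring.
Qed.

Lemma Cmod_qpow tau a : Cmod (qpow tau a) = exp (- (2 * PI * a * snd tau)).
Proof.
  unfold qpow, cexp, Cmod. destruct tau as [x y]; simpl.
  replace (0 * x - 2 * PI * a * y) with (- (2 * PI * a * y)) by ring.
  set (e := exp _). set (t := 0 * y + 2 * PI * a * x).
  replace (e * cos t * (e * cos t * 1) + e * sin t * (e * sin t * 1)) with (Rsqr e * (Rsqr (sin t) + Rsqr (cos t))) by (unfold Rsqr; ring).
  rewrite sin2_cos2, Rmult_1_r. apply sqrt_Rsqr.
  left; apply exp_pos.
Qed.

Lemma qpow_neq0 tau a : qpow tau a <> RtoC 0.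
Proof.
  intro H. assert (Cmod (qpow tau a) = 0) by (rewrite H; apply Cmod_0).
  rewrite Cmod_qpow in H0. pose proof (exp_pos (- (2 * PI * a * snd tau))). lra.
Qed.

Lemma qpow_inv tau a : Cinv (qpow tau a) = qpow tau (- a).
Proof.
  assert (H : Cmult (qpow tau a) (qpow tau (-a)) = RtoC 1).
  { rewrite <- qpow_add, Rplus_opp_r. apply qpow_0. }
  pose proof (qpow_neq0 tau a) as Hn.
  transitivity (Cmult (Cinv (qpow tau a)) (Cmult (qpow tau a) (qpow tau (-a)))).
  - rewrite H. ring.
  - field. exact Hn.
Qed.

Lemma Cpow_qpow tau a n : Cpow (qpow tau a) n = qpow tau (a * INR n).
Proof.
  induction n.
  - simpl. rewrite Rmult_0_r, qpow_0. reflexivity.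
  - simpl Cpow. rewrite IHn, <- qpow_add. f_equal. rewrite S_INR. ring.
Qed.

Lemma Czpow_qpow tau a k : Czpow (qpow tau a) k = qpow tau (a * IZR k).
Proof.
  destruct k as [|p|p]; simpl.
  - rewrite Rmult_0_r, qpow_0; reflexivity.
  - rewrite Cpow_qpow. f_equal. f_equal. rewrite INR_IZR_INZ, positive_nat_Z. reflexivity.
  - rewrite Cpow_qpow, qpow_inv. f_equal. rewrite INR_IZR_INZ, positive_nat_Z.
    rewrite <- Pos2Z.opp_pos, opp_IZR. ring.
Qed.

Definition sg (k : Z) : C := if Z.even k then RtoC 1 else RtoC (-1).

Lemma Cpow_m1 n : Cpow (RtoC (-1)) n = if Nat.even n then RtoC 1 else RtoC (-1).
Proof.
  induction n.
  - reflexivity.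
  - simpl Cpow. rewrite IHn, Nat.even_succ, <- Nat.negb_even.
    destruct (Nat.even n); simpl; unfold RtoC, Cmult; simpl; f_equal; ring.
Qed.

Lemma Zeven_of_nat n : Z.even (Z.of_nat n) = Nat.even n.
Proof.
  induction n.
  - reflexivity.
  - rewrite Nat2Z.inj_succ, Z.even_succ, <- Z.negb_even, IHn, Nat.even_succ, <- Nat.negb_even.
    reflexivity.
Qed.

Lemma Czpow_m1 k : Czpow (RtoC (-1)) k = sg k.
Proof.
  unfold sg. destruct k as [|p|p]; simpl Czpow.
  - reflexivity.
  - rewrite Cpow_m1. rewrite <- (positive_nat_Z p), Zeven_of_nat. reflexivity.
  - rewrite Cpow_m1. change (Z.even (Z.neg p)) with (Z.even (Z.pos p)). rewrite <- (positive_nat_Z p), Zeven_of_nat.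
    destruct (Nat.even (Pos.to_nat p)); unfold Cinv, RtoC; simpl; f_equal; field.
Qed.

Lemma sg_add1 k : sg (k + 1) = Copp (sg k).
Proof.
  unfold sg. rewrite Z.even_add. destruct (Z.even k); simpl; unfold Copp, RtoC; simpl; f_equal; ring.
Qed.


Lemma Csum_ext n u v : (forall k, (k < n)%nat -> u k = v k) -> Csum n u = Csum n v.
Proof.
  induction n; intros H; simpl; [reflexivity|].
  rewrite IHn by (intros; apply H; lia). rewrite H by lia. reflexivity.
Qed.

Lemma Csum_plus n u v : Csum n (fun k => Cplus (u k) (v k)) = Cplus (Csum n u) (Csum n v).
Proof. induction n; simpl; [ring|]. rewrite IHn. ring. Qed.

Lemma Csum_scal n c u : Csum n (fun k => Cmult c (u k)) = Cmult c (Csum n u).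
Proof. induction n; simpl; [ring|]. rewrite IHn. ring. Qed.

Lemma Csum_minus n u v : Csum n (fun k => Cminus (u k) (v k)) = Cminus (Csum n u) (Csum n v).
Proof. induction n; simpl; [ring|]. rewrite IHn. ring. Qed.

Lemma Csum_swap n m (f : nat -> nat -> C) :
  Csum n (fun i => Csum m (fun j => f i j)) = Csum m (fun j => Csum n (fun i => f i j)).
Proof.
  induction n; simpl.
  - induction m; simpl; [reflexivity|]. rewrite <- IHm. ring.
  - rewrite IHn. rewrite <- Csum_plus. reflexivity.
Qed.

Lemma Csum_first n u : Csum (S n) u = Cplus (u O) (Csum n (fun k => u (S k))).
Proof.
  induction n; simpl; [ring|]. simpl in IHn. rewrite IHn. ring.
Qed.

Lemma Csum_rev n u : Csum n (fun k => u (n - 1 - k)%nat) = Csum n u.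
Proof.
  induction n; [reflexivity|].
  rewrite Csum_first. simpl Csum at 2.
  replace (S n - 1 - 0)%nat with n by lia.
  rewrite (Csum_ext n (fun k => u (S n - 1 - S k)%nat) (fun k => u (n - 1 - k)%nat)).
  - rewrite IHn. ring.
  - intros. f_equal. lia.
Qed.

Lemma Cmod_Csum_le n u B : (forall k, (k < n)%nat -> Cmod (u k) <= B) ->
  Cmod (Csum n u) <= INR n * B.
Proof.
  induction n; intros H.
  - simpl. rewrite Cmod_0. lra.
  - change (Csum (S n) u) with (Cplus (Csum n u) (u n)).
    eapply Rle_trans; [apply Cmod_triangle|].
    rewrite S_INR. assert (H1 := H n ltac:(lia)).
    assert (H2 := IHn ltac:(intros; apply H; lia)). lra.
Qed.

Definition zsum (a : Z) (n : nat) (f : Z -> C) : C :=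
  Csum n (fun k => f (a + Z.of_nat k)%Z).

Lemma zsum_ext a n f g : (forall z, f z = g z) -> zsum a n f = zsum a n g.
Proof. intros H. unfold zsum. apply Csum_ext. intros; apply H. Qed.

Lemma zsum_plus a n f g : zsum a n (fun z => Cplus (f z) (g z)) = Cplus (zsum a n f) (zsum a n g).
Proof. apply Csum_plus. Qed.
Lemma zsum_minus a n f g : zsum a n (fun z => Cminus (f z) (g z)) = Cminus (zsum a n f) (zsum a n g).
Proof. apply Csum_minus. Qed.
Lemma zsum_scal a n c f : zsum a n (fun z => Cmult c (f z)) = Cmult c (zsum a n f).
Proof. apply Csum_scal. Qed.

Lemma zsum_shift a n b f : zsum a n (fun z => f (z + b)%Z) = zsum (a + b) n f.
Proof. unfold zsum. apply Csum_ext. intros. f_equal. lia. Qed.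

Lemma zsum_S a n f : zsum a (S n) f = Cplus (zsum a n f) (f (a + Z.of_nat n)%Z).
Proof. reflexivity. Qed.

Lemma zsum_tele a n f : zsum a n (fun z => Cminus (f (z + 1)%Z) (f z)) = Cminus (f (a + Z.of_nat n)%Z) (f a).
Proof.
  induction n.
  - simpl. unfold zsum; simpl. rewrite Z.add_0_r. ring.
  - rewrite zsum_S, IHn. replace (a + Z.of_nat n + 1)%Z with (a + Z.of_nat (S n))%Z by lia. ring.
Qed.

Lemma zsum_rev a n c f : zsum a n (fun z => f (c - z)%Z) = zsum (c - a - Z.of_nat n + 1) n f.
Proof.
  unfold zsum. rewrite <- (Csum_rev n (fun k => f (c - a - Z.of_nat n + 1 + Z.of_nat k)%Z)).
  apply Csum_ext. intros k Hk. f_equal. rewrite Nat2Z.inj_sub by lia. rewrite Nat2Z.inj_sub by lia. simpl. lia.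
Qed.

Lemma zsum_swap a n b m (f : Z -> Z -> C) :
  zsum a n (fun r => zsum b m (fun s => f r s)) = zsum b m (fun s => zsum a n (fun r => f r s)).
Proof. unfold zsum. apply Csum_swap. Qed.

Lemma Cmod_zsum_le a n f B : (forall k, (a <= k < a + Z.of_nat n)%Z -> Cmod (f k) <= B) ->
  Cmod (zsum a n f) <= INR n * B.
Proof. intros H. apply Cmod_Csum_le. intros k Hk. apply H. lia. Qed.

Definition sq (M : nat) (g : Z -> Z -> C) : C :=
  zsum (- Z.of_nat M) (2 * M) (fun r => zsum (- Z.of_nat M) (2 * M) (fun s => g r s)).

Lemma sq_ext M g h : (forall r s, g r s = h r s) -> sq M g = sq M h.
Proof. intros H. unfold sq. apply zsum_ext; intro; apply zsum_ext; intro; apply H. Qed.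

Lemma sq_plus M g h : sq M (fun r s => Cplus (g r s) (h r s)) = Cplus (sq M g) (sq M h).
Proof. unfold sq. rewrite <- zsum_plus. apply zsum_ext; intro; apply zsum_plus. Qed.
Lemma sq_minus M g h : sq M (fun r s => Cminus (g r s) (h r s)) = Cminus (sq M g) (sq M h).
Proof. unfold sq. rewrite <- zsum_minus. apply zsum_ext; intro; apply zsum_minus. Qed.
Lemma sq_scal M c g : sq M (fun r s => Cmult c (g r s)) = Cmult c (sq M g).
Proof. unfold sq. rewrite <- zsum_scal. apply zsum_ext; intro; apply zsum_scal. Qed.

Lemma sq_swap M g : sq M (fun r s => g s r) = sq M g.
Proof. unfold sq. apply zsum_swap. Qed.

Lemma sq_reflr M c g : sq M (fun r s => g (c - r)%Z s) = sq M (fun r s => g (r + (c + 1))%Z s).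
Proof.
  unfold sq. rewrite (zsum_rev _ _ c (fun r => zsum _ _ (fun s => g r s))).
  rewrite (zsum_shift _ _ (c+1) (fun r => zsum _ _ (fun s => g r s))).
  f_equal. lia.
Qed.

Lemma sq_refls M c g : sq M (fun r s => g r (c - s)%Z) = sq M (fun r s => g r (s + (c + 1))%Z).
Proof.
  rewrite <- sq_swap. rewrite (sq_reflr M c (fun r s => g s r)).
  rewrite <- sq_swap. reflexivity.
Qed.


Lemma exp_mono x y : x <= y -> exp x <= exp y.
Proof. intros [H|H]; [left; apply exp_increasing; exact H | right; subst; reflexivity]. Qed.

Lemma exp_nat x n : exp (x * INR n) = exp x ^ n.
Proof.
  induction n.
  - simpl. rewrite Rmult_0_r, exp_0. reflexivity.
  - rewrite S_INR. simpl pow. rewrite <- IHn, <- exp_plus. f_equal. ring.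
Qed.

Definition Ccv0 (e : nat -> C) := is_lim_seq (fun M => Cmod (e M)) 0.
Definition Ccv (u : nat -> C) (l : C) :=
  is_lim_seq (fun M => fst (u M)) (fst l) /\ is_lim_seq (fun M => snd (u M)) (snd l).

Lemma Ccv0_le e b : (forall M, Cmod (e M) <= b M) -> is_lim_seq b 0 -> Ccv0 e.
Proof.
  intros H Hb. apply (is_lim_seq_le_le (fun _ => 0) _ b).
  - intros; split; [apply Cmod_ge_0 | apply H].
  - apply is_lim_seq_const.
  - exact Hb.
Qed.

Lemma geo_lim lam C0 : 0 < lam -> is_lim_seq (fun M => C0 * exp (- lam / 2) ^ M) 0.
Proof.
  intros Hl. replace (Finite 0) with (Rbar_mult C0 0) by (simpl; f_equal; ring).
  apply is_lim_seq_scal_l. apply is_lim_seq_geom.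
  rewrite Rabs_pos_eq by (left; apply exp_pos).
  rewrite <- exp_0. apply exp_increasing. lra.
Qed.

Lemma lin_exp_bound lam M : 0 < lam ->
  INR M * exp (- lam * INR M) <= (2 / lam) * exp (- lam / 2) ^ M.
Proof.
  intros Hl. rewrite <- exp_nat.
  pose proof (exp_ineq1_le (lam * INR M / 2)) as H.
  pose proof (pos_INR M).
  assert (E : exp (- lam / 2 * INR M) = exp (lam * INR M / 2) * exp (- lam * INR M)).
  { rewrite <- exp_plus. f_equal. field. }
  rewrite E. pose proof (exp_pos (- lam * INR M)).
  assert (INR M <= 2 / lam * exp (lam * INR M / 2)).
  { apply Rmult_le_reg_l with (lam / 2). lra.
    replace (lam / 2 * (2 / lam * exp (lam * INR M / 2))) with (exp (lam * INR M / 2)) by (field; lra).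
    lra. }
  replace (2 / lam * (exp (lam * INR M / 2) * exp (- lam * INR M)))
    with ((2 / lam * exp (lam * INR M / 2)) * exp (- lam * INR M)) by ring.
  apply Rmult_le_compat_r; lra.
Qed.

Lemma Ccv0_plus e f : Ccv0 e -> Ccv0 f -> Ccv0 (fun M => Cplus (e M) (f M)).
Proof.
  intros He Hf. apply (Ccv0_le _ (fun M => Cmod (e M) + Cmod (f M))).
  - intros; apply Cmod_triangle.
  - replace (Finite 0) with (Finite (0 + 0)) by (f_equal; ring). apply is_lim_seq_plus'; assumption.
Qed.

Lemma Ccv0_scal c e : Ccv0 e -> Ccv0 (fun M => Cmult c (e M)).
Proof.
  intros He. apply (Ccv0_le _ (fun M => Cmod c * Cmod (e M))).
  - intros; rewrite Cmod_mult; lra.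
  - replace (Finite 0) with (Rbar_mult (Cmod c) 0) by (simpl; f_equal; ring).
    apply is_lim_seq_scal_l; assumption.
Qed.

Lemma Ccv0_ext e f : (forall M, e M = f M) -> Ccv0 e -> Ccv0 f.
Proof. intros H He. unfold Ccv0. apply (is_lim_seq_ext (fun M => Cmod (e M))); [intros; rewrite H; reflexivity | exact He]. Qed.

Lemma Ccv0_opp e : Ccv0 e -> Ccv0 (fun M => Copp (e M)).
Proof. intros He. apply (Ccv0_ext (fun M => Cmult (RtoC (-1)) (e M))); [intros; ring | apply Ccv0_scal, He]. Qed.

Lemma Ccv0_minus e f : Ccv0 e -> Ccv0 f -> Ccv0 (fun M => Cminus (e M) (f M)).
Proof. intros He Hf. apply Ccv0_plus; [exact He | apply Ccv0_opp, Hf]. Qed.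

Lemma Ccv0_Ccv e : Ccv0 e -> Ccv e (RtoC 0).
Proof.
  intros He. split; simpl.
  - apply is_lim_seq_abs_0. apply (is_lim_seq_le_le (fun _ => 0) _ (fun M => Cmod (e M))).
    + intros M; split; [apply Rabs_pos|]. pose proof (Rmax_Cmod (e M)).
      pose proof (Rmax_l (Rabs (fst (e M))) (Rabs (snd (e M)))). lra.
    + apply is_lim_seq_const.
    + exact He.
  - apply is_lim_seq_abs_0. apply (is_lim_seq_le_le (fun _ => 0) _ (fun M => Cmod (e M))).
    + intros M; split; [apply Rabs_pos|]. pose proof (Rmax_Cmod (e M)).
      pose proof (Rmax_r (Rabs (fst (e M))) (Rabs (snd (e M)))). lra.
    + apply is_lim_seq_const.
    + exact He.
Qed.

Lemma Clim_Ccv u l : Ccv u l -> Clim u = l.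
Proof.
  intros [H1 H2]. unfold Clim.
  rewrite (is_lim_seq_unique _ _ H1), (is_lim_seq_unique _ _ H2). destruct l; reflexivity.
Qed.

Lemma Ccv_comb u v c l : Ccv v l -> Ccv0 (fun M => Cminus (u M) (Cmult c (v M))) ->
  Ccv u (Cmult c l).
Proof.
  intros [H1 H2] H0. destruct (Ccv0_Ccv _ H0) as [E1 E2]. simpl in E1, E2.
  destruct c as [c1 c2], l as [l1 l2]. simpl in *.
  split; simpl.
  - set (w := fun M => fst (Cminus (u M) (Cmult (c1, c2) (v M)))).
    apply (is_lim_seq_ext (fun M => w M + (c1 * fst (v M) - c2 * snd (v M)))).
    + intros M. unfold w. destruct (u M), (v M). simpl. ring.
    + replace (c1 * l1 - c2 * l2) with (0 + (c1 * l1 - c2 * l2)) by ring.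
      apply is_lim_seq_plus'; [exact E1|]. apply is_lim_seq_minus'.
      * apply (is_lim_seq_scal_l _ c1 l1 H1).
      * apply (is_lim_seq_scal_l _ c2 l2 H2).
  - set (w := fun M => snd (Cminus (u M) (Cmult (c1, c2) (v M)))).
    apply (is_lim_seq_ext (fun M => w M + (c1 * snd (v M) + c2 * fst (v M)))).
    + intros M. unfold w. destruct (u M), (v M). simpl. ring.
    + replace (c1 * l2 + c2 * l1) with (0 + (c1 * l2 + c2 * l1)) by ring.
      apply is_lim_seq_plus'; [exact E2|]. apply is_lim_seq_plus'.
      * apply (is_lim_seq_scal_l _ c1 l2 H2).
      * apply (is_lim_seq_scal_l _ c2 l1 H1).
Qed.


Definition dec (lam : R) (g : Z -> Z -> C) :=
  exists K, forall r s, Cmod (g r s) <= K * exp (- lam * (Rabs (IZR r) + Rabs (IZR s))).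

Lemma dec_K_nonneg lam g K : (forall r s, Cmod (g r s) <= K * exp (- lam * (Rabs (IZR r) + Rabs (IZR s)))) -> 0 <= K.
Proof.
  intros H. specialize (H 0%Z 0%Z). pose proof (Cmod_ge_0 (g 0%Z 0%Z)).
  set (e := exp _) in H. assert (0 < e) by apply exp_pos.
  destruct (Rle_or_lt 0 K); [assumption|]. exfalso. assert (K * e < 0) by (apply Rmult_neg_pos; auto). lra.
Qed.

Lemma exp_far lam x y t : 0 < lam -> t <= Rabs x + Rabs y ->
  exp (- lam * (Rabs x + Rabs y)) <= exp (- lam * t).
Proof. intros. apply exp_mono. nra. Qed.

Lemma dec_swap lam g : dec lam g -> dec lam (fun r s => g s r).
Proof. intros [K H]. exists K. intros r s. rewrite Rplus_comm. apply H. Qed.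

Lemma dec_shift lam g a b : 0 < lam -> dec lam g -> dec lam (fun r s => g (r + a)%Z (s + b)%Z).
Proof.
  intros Hl [K H]. pose proof (dec_K_nonneg _ _ _ H) as HK.
  exists (K * exp (lam * (Rabs (IZR a) + Rabs (IZR b)))). intros r s.
  eapply Rle_trans; [apply H|]. rewrite Rmult_assoc. apply Rmult_le_compat_l; [exact HK|].
  rewrite <- exp_plus. apply exp_mono. rewrite !plus_IZR.
  pose proof (Rabs_triang (IZR r + IZR a) (- IZR a)). pose proof (Rabs_triang (IZR s + IZR b) (- IZR b)).
  rewrite Rabs_Ropp in *. replace (IZR r + IZR a + - IZR a) with (IZR r) in * by ring.
  replace (IZR s + IZR b + - IZR b) with (IZR s) in * by ring. nra.
Qed.

Lemma dec_plus lam g h : dec lam g -> dec lam h -> dec lam (fun r s => Cplus (g r s) (h r s)).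
Proof.
  intros [K1 H1] [K2 H2]. exists (K1 + K2). intros r s.
  eapply Rle_trans; [apply Cmod_triangle|]. specialize (H1 r s). specialize (H2 r s). lra.
Qed.

Lemma dec_scal lam c g : dec lam g -> dec lam (fun r s => Cmult c (g r s)).
Proof.
  intros [K H]. exists (Cmod c * K). intros r s. rewrite Cmod_mult, Rmult_assoc.
  apply Rmult_le_compat_l; [apply Cmod_ge_0|apply H].
Qed.

Lemma dec_ext lam g h : (forall r s, g r s = h r s) -> dec lam g -> dec lam h.
Proof. intros E [K H]. exists K. intros r s. rewrite <- E. apply H. Qed.

Lemma sq_0 g : sq 0 g = RtoC 0.
Proof. reflexivity. Qed.

Lemma zsum2 a n f : zsum (a - 1) (S (S n)) f =
  Cplus (Cplus (f (a - 1)%Z) (zsum a n f)) (f (a + Z.of_nat n)%Z).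
Proof.
  rewrite zsum_S. unfold zsum. rewrite Csum_first. f_equal; [f_equal|].
  - f_equal. lia.
  - apply Csum_ext. intros k _. f_equal. lia.
  - f_equal. lia.
Qed.

Lemma sq_S M g : sq (S M) g =
  Cplus (Cplus (Cplus (zsum (- Z.of_nat (S M)) (2 * S M)
                 (fun r => Cplus (g r (- Z.of_nat M - 1)%Z) (g r (Z.of_nat M))))
        (zsum (- Z.of_nat M) (2 * M) (fun s => g (- Z.of_nat M - 1)%Z s)))
        (sq M g))
        (zsum (- Z.of_nat M) (2 * M) (fun s => g (Z.of_nat M) s)).
Proof.
  unfold sq. replace (2 * S M)%nat with (S (S (2 * M))) by lia.
  replace (- Z.of_nat (S M))%Z with (- Z.of_nat M - 1)%Z by lia.
  rewrite (zsum_ext _ _ (fun r => zsum (- Z.of_nat M - 1) (S (S (2 * M))) (fun s => g r s))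
     (fun r => Cplus (Cplus (g r (- Z.of_nat M - 1)%Z) (zsum (- Z.of_nat M) (2*M) (fun s => g r s))) (g r (Z.of_nat M)))).
  2:{ intros r. rewrite zsum2. do 2 f_equal. lia. }
  rewrite (zsum_ext _ _ (fun r => Cplus (Cplus _ _) _)
     (fun r => Cplus (Cplus (g r (- Z.of_nat M - 1)%Z) (g r (Z.of_nat M))) (zsum (- Z.of_nat M) (2*M) (fun s => g r s)))).
  2:{ intros r. ring. }
  rewrite zsum_plus. rewrite (zsum2 _ _ (fun r => zsum (- Z.of_nat M) (2*M) (fun s => g r s))).
  replace (- Z.of_nat M + Z.of_nat (2 * M))%Z with (Z.of_nat M) by lia. ring.
Qed.

Lemma sq_shell lam g K M : 0 < lam ->
  (forall r s, Cmod (g r s) <= K * exp (- lam * (Rabs (IZR r) + Rabs (IZR s)))) ->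
  Cmod (Cminus (sq (S M) g) (sq M g)) <= K * (8 * INR M + 4) * exp (- lam * INR M).
Proof.
  intros Hl H. pose proof (dec_K_nonneg _ _ _ H) as HK.
  set (e := exp (- lam * INR M)).
  assert (Hb : forall r s, INR M <= Rabs (IZR r) + Rabs (IZR s) -> Cmod (g r s) <= K * e).
  { intros r s Hrs. eapply Rle_trans; [apply H|]. apply Rmult_le_compat_l; [exact HK|]. apply exp_far; assumption. }
  assert (HM : forall z : Z, z = (- Z.of_nat M - 1)%Z \/ z = Z.of_nat M -> INR M <= Rabs (IZR z)).
  { intros z [-> | ->]; rewrite INR_IZR_INZ.
    - rewrite Rabs_left1; [|apply IZR_le; lia]. rewrite <- opp_IZR. apply IZR_le. lia.
    - rewrite Rabs_pos_eq; [lra|apply IZR_le; lia]. }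
  rewrite sq_S.
  set (A := zsum _ _ _). set (B := zsum (- Z.of_nat M) (2 * M) (fun s => g (- Z.of_nat M - 1)%Z s)).
  set (D := zsum (- Z.of_nat M) (2 * M) (fun s => g (Z.of_nat M) s)).
  replace (Cminus (Cplus (Cplus (Cplus A B) (sq M g)) D) (sq M g)) with (Cplus (Cplus A B) D) by ring.
  assert (HA : Cmod A <= INR (2 * S M) * (K * e + K * e)).
  { apply Cmod_zsum_le. intros k _. eapply Rle_trans; [apply Cmod_triangle|].
    pose proof (Rabs_pos (IZR k)).
    apply Rplus_le_compat; apply Hb.
    - pose proof (HM (- Z.of_nat M - 1)%Z (or_introl eq_refl)). lra.
    - pose proof (HM (Z.of_nat M) (or_intror eq_refl)). lra. }
  assert (HB : Cmod B <= INR (2 * M) * (K * e)).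
  { apply Cmod_zsum_le. intros k _. apply Hb.
    pose proof (Rabs_pos (IZR k)). pose proof (HM (- Z.of_nat M - 1)%Z (or_introl eq_refl)). lra. }
  assert (HD : Cmod D <= INR (2 * M) * (K * e)).
  { apply Cmod_zsum_le. intros k _. apply Hb.
    pose proof (Rabs_pos (IZR k)). pose proof (HM (Z.of_nat M) (or_intror eq_refl)). lra. }
  assert (I2 : INR 2 = 2) by (simpl; ring).
  replace (INR (2 * S M)) with (2 * (INR M + 1)) in HA by (rewrite mult_INR, I2, S_INR; ring).
  replace (INR (2 * M)) with (2 * INR M) in HB, HD by (rewrite mult_INR, I2; ring).
  pose proof (Cmod_triangle (Cplus A B) D). pose proof (Cmod_triangle A B).
  replace (K * (8 * INR M + 4) * e) with ((2 * (INR M + 1)) * (K * e + K * e) + 2 * INR M * (K * e) + 2 * INR M * (K * e)) by ring.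
  lra.
Qed.

Lemma sq_conv lam g : 0 < lam -> dec lam g -> exists l, Ccv (fun M => sq M g) l.
Proof.
  intros Hl [K H]. pose proof (dec_K_nonneg _ _ _ H) as HK.
  set (d := fun M => Cminus (sq (S M) g) (sq M g)).
  set (A := 4 + 16 / lam).
  assert (Hd : forall M, Cmod (d M) <= K * A * exp (- lam / 2) ^ M).
  { intros M. eapply Rle_trans; [apply (sq_shell lam g K M Hl H)|].
    rewrite <- exp_nat. rewrite Rmult_assoc, Rmult_assoc. apply Rmult_le_compat_l; [exact HK|].
    pose proof (exp_ineq1_le (lam * INR M / 2)). pose proof (pos_INR M).
    assert (E : exp (- lam / 2 * INR M) = exp (lam * INR M / 2) * exp (- lam * INR M)).
    { rewrite <- exp_plus. f_equal. field. }
    rewrite E. pose proof (exp_pos (- lam * INR M)).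
    assert (8 * INR M + 4 <= A * exp (lam * INR M / 2)).
    { unfold A. assert (0 < 16 / lam) by (apply Rdiv_lt_0_compat; lra).
      assert (16 / lam * (lam * INR M / 2) = 8 * INR M) by (field; lra).
      assert (0 <= 16 / lam * (lam * INR M / 2)) by nra. nra. }
    rewrite <- Rmult_assoc. apply Rmult_le_compat_r; lra. }
  assert (Hgeo : ex_series (fun M => exp (- lam / 2) ^ M * (K * A))).
  { apply ex_series_scal_r. apply ex_series_geom. rewrite Rabs_pos_eq by (left; apply exp_pos).
    rewrite <- exp_0. apply exp_increasing. lra. }
  assert (S1 : ex_series (fun M => fst (d M))).
  {     apply (@ex_series_le R_AbsRing R_CompleteNormedModule _ (fun M => exp (- lam / 2) ^ M * (K * A))); [|exact Hgeo].
    intros M. change (norm (fst (d M))) with (Rabs (fst (d M))).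
    pose proof (Rmax_Cmod (d M)). pose proof (Rmax_l (Rabs (fst (d M))) (Rabs (snd (d M)))).
    specialize (Hd M). lra. }
  assert (S2 : ex_series (fun M => snd (d M))).
  { apply (@ex_series_le R_AbsRing R_CompleteNormedModule _ (fun M => exp (- lam / 2) ^ M * (K * A))); [|exact Hgeo].
    intros M. change (norm (snd (d M))) with (Rabs (snd (d M))).
    pose proof (Rmax_Cmod (d M)). pose proof (Rmax_r (Rabs (fst (d M))) (Rabs (snd (d M)))).
    specialize (Hd M). lra. }
  destruct S1 as [l1 L1], S2 as [l2 L2]. exists (l1, l2). split; simpl.
  - apply is_lim_seq_incr_1. apply (is_lim_seq_ext (sum_n (fun M => fst (d M)))); [|exact L1].
    intros n. induction n.
    + rewrite sum_O. unfold d. rewrite sq_0. simpl. ring.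
    + rewrite sum_Sn, IHn. unfold d. simpl. change plus with Rplus. ring.
  - apply is_lim_seq_incr_1. apply (is_lim_seq_ext (sum_n (fun M => snd (d M)))); [|exact L2].
    intros n. induction n.
    + rewrite sum_O. unfold d. rewrite sq_0. simpl. ring.
    + rewrite sum_Sn, IHn. unfold d. simpl. change plus with Rplus. ring.
Qed.


Lemma transl_s1 lam g : 0 < lam -> dec lam g ->
  Ccv0 (fun M => Cminus (sq M (fun r s => g r (s + 1)%Z)) (sq M g)).
Proof.
  intros Hl [K H]. pose proof (dec_K_nonneg _ _ _ H) as HK.
  apply (Ccv0_le _ (fun M => 4 * K * (2 / lam * exp (- lam / 2) ^ M))).
  2:{ replace (Finite 0) with (Rbar_mult (4 * K) 0) by (simpl; f_equal; ring).
      apply is_lim_seq_scal_l. apply geo_lim. exact Hl. }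
  intros M. unfold sq. rewrite <- zsum_minus.
  rewrite (zsum_ext _ _ _ (fun r => Cminus (g r (Z.of_nat M)) (g r (- Z.of_nat M)%Z))).
  2:{ intros r. rewrite <- zsum_minus. rewrite (zsum_tele _ _ (fun s => g r s)). do 2 f_equal. lia. }
  eapply Rle_trans.
  - apply (Cmod_zsum_le _ _ _ (2 * K * exp (- lam * INR M))).
    intros k _. unfold Cminus. eapply Rle_trans; [apply Cmod_triangle|]. rewrite Cmod_opp.
    assert (forall z, INR M <= Rabs (IZR z) -> Cmod (g k z) <= K * exp (- lam * INR M)).
    { intros z Hz. eapply Rle_trans; [apply H|]. apply Rmult_le_compat_l; [exact HK|].
      apply exp_far; [exact Hl|]. pose proof (Rabs_pos (IZR k)). lra. }
    assert (INR M <= Rabs (IZR (Z.of_nat M))) by (rewrite <- INR_IZR_INZ, Rabs_pos_eq; [lra|apply pos_INR]).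
    assert (INR M <= Rabs (IZR (- Z.of_nat M))) by (rewrite opp_IZR, Rabs_Ropp, <- INR_IZR_INZ, Rabs_pos_eq; [lra|apply pos_INR]).
    pose proof (H0 _ H1). pose proof (H0 _ H2). lra.
  - pose proof (lin_exp_bound lam M Hl).
    replace (INR (2 * M)) with (2 * INR M) by (rewrite mult_INR; simpl; ring).
    replace (2 * INR M * (2 * K * exp (- lam * INR M))) with (4 * K * (INR M * exp (- lam * INR M))) by ring.
    apply Rmult_le_compat_l; [lra|exact H0].
Qed.

Lemma transl_s lam b : 0 < lam -> forall g, dec lam g ->
  Ccv0 (fun M => Cminus (sq M (fun r s => g r (s + b)%Z)) (sq M g)).
Proof.
  intros Hl. induction b using Z.peano_ind; intros g Hg.
  - apply (Ccv0_ext (fun _ => RtoC 0)).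
    + intros M. rewrite (sq_ext M _ g) by (intros; f_equal; lia). ring.
    + unfold Ccv0. apply (is_lim_seq_ext (fun _ => 0)); [intros; rewrite Cmod_0; reflexivity|apply is_lim_seq_const].
  - set (h := fun r s => g r (s + b)%Z).
    assert (Hh : dec lam h) by (apply (dec_shift lam g 0 b Hl) in Hg; eapply dec_ext; [|exact Hg]; intros; unfold h; simpl; f_equal; lia).
    apply (Ccv0_ext (fun M => Cplus (Cminus (sq M (fun r s => h r (s + 1)%Z)) (sq M h)) (Cminus (sq M h) (sq M g)))).
    + intros M. rewrite (sq_ext M (fun r s => h r (s + 1)%Z) (fun r s => g r (s + Z.succ b)%Z)) by (intros; unfold h; f_equal; lia). ring.
    + apply Ccv0_plus; [apply (transl_s1 lam); assumption | apply IHb, Hg].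
  - set (h := fun r s => g r (s - 1)%Z).
    assert (Hh : dec lam h) by (apply (dec_shift lam g 0 (-1) Hl) in Hg; eapply dec_ext; [|exact Hg]; intros; unfold h; simpl; f_equal; lia).
    apply (Ccv0_ext (fun M => Cminus (Cminus (sq M (fun r s => h r (s + b)%Z)) (sq M h))
                                     (Cminus (sq M (fun r s => h r (s + 1)%Z)) (sq M h)))).
    + intros M. rewrite (sq_ext M (fun r s => h r (s + b)%Z) (fun r s => g r (s + Z.pred b)%Z)) by (intros; unfold h; f_equal; lia).
      rewrite (sq_ext M (fun r s => h r (s + 1)%Z) g) by (intros; unfold h; f_equal; lia). ring.
    + apply Ccv0_minus; [|apply (transl_s1 lam); assumption].
      exact (IHb h Hh).
Qed.

Lemma transl lam a b g : 0 < lam -> dec lam g ->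
  Ccv0 (fun M => Cminus (sq M (fun r s => g (r + a)%Z (s + b)%Z)) (sq M g)).
Proof.
  intros Hl Hg.
  set (h := fun r s => g r (s + b)%Z).
  assert (Hh : dec lam h) by (apply (dec_shift lam g 0 b Hl) in Hg; eapply dec_ext; [|exact Hg]; intros; unfold h; simpl; f_equal; lia).
  apply (Ccv0_ext (fun M => Cplus (Cminus (sq M (fun r s => h (s + a)%Z r)) (sq M (fun r s => h s r)))
                                  (Cminus (sq M h) (sq M g)))).
  - intros M.
    assert (E1 : sq M (fun r s => h (s + a)%Z r) = sq M (fun r s => g (r + a)%Z (s + b)%Z))
      by exact (sq_swap M (fun r s => h (r + a)%Z s)).
    assert (E2 : sq M (fun r s => h s r) = sq M h) by exact (sq_swap M h).
    rewrite E1, E2. ring.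
  - apply Ccv0_plus.
    + apply (transl_s lam a Hl (fun r s => h s r)). apply dec_swap, Hh.
    + apply (transl_s lam); assumption.
Qed.

Lemma theta_r lam c g : 0 < lam -> dec lam g -> (forall r s, g (c - r)%Z s = Copp (g r s)) ->
  Ccv0 (fun M => sq M g).
Proof.
  intros Hl Hg Hanti.
  apply (Ccv0_ext (fun M => Cmult (RtoC (- / 2)) (Cminus (sq M (fun r s => g (r + (c + 1))%Z (s + 0)%Z)) (sq M g)))).
  - intros M.
    assert (E : sq M (fun r s => g (r + (c + 1))%Z (s + 0)%Z) = Copp (sq M g)).
    { rewrite (sq_ext M _ (fun r s => g (r + (c + 1))%Z s)) by (intros; f_equal; lia).
      rewrite <- sq_reflr. rewrite (sq_ext M _ (fun r s => Cmult (RtoC (-1)) (g r s))) by (intros; rewrite Hanti; ring).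
      rewrite sq_scal. ring. }
    rewrite E. destruct (sq M g) as [x y]. unfold Cmult, Cminus, Copp, Cplus, RtoC; simpl. f_equal; field.
  - apply Ccv0_scal. apply (transl lam); assumption.
Qed.

Lemma theta_s lam c g : 0 < lam -> dec lam g -> (forall r s, g r (c - s)%Z = Copp (g r s)) ->
  Ccv0 (fun M => sq M g).
Proof.
  intros Hl Hg Hanti. apply (Ccv0_ext (fun M => sq M (fun r s => g s r))).
  - intros; apply sq_swap.
  - apply (theta_r lam c); [exact Hl| apply dec_swap, Hg|]. intros; apply Hanti.
Qed.


Lemma tri_IZR r : IZR (r * (r - 1) / 2) = IZR r * (IZR r - 1) / 2.
Proof.
  destruct (Z.Even_or_Odd r) as [[k ->]|[k ->]].
  - replace (2 * k * (2 * k - 1))%Z with ((k * (2 * k - 1)) * 2)%Z by ring.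
    rewrite Z.div_mul by lia. rewrite ?mult_IZR, ?minus_IZR, ?plus_IZR, ?mult_IZR. field.
  - replace ((2 * k + 1) * (2 * k + 1 - 1))%Z with ((k * (2 * k + 1)) * 2)%Z by ring.
    rewrite Z.div_mul by lia. rewrite ?mult_IZR, ?minus_IZR, ?plus_IZR, ?mult_IZR. field.
Qed.

Definition lamq (tau : C) := 2 * PI * snd tau.

Definition Eexp (N : nat) (a b : R) (r s : Z) : R :=
  a * IZR r + b * IZR s + (IZR r * (IZR r - 1) / 2 + (INR N + 1) * IZR r * IZR s + IZR s * (IZR s - 1) / 2).

Definition T (tau : C) (N : nat) (a b : R) (r s : Z) : C :=
  Cmult (sg (r + s)) (qpow tau (Eexp N a b r s)).

Definition Wf (tau : C) (N : nat) (a b : R) (v : Z -> Z -> R) (r s : Z) : C :=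
  Cmult (RtoC (v r s)) (T tau N a b r s).

Definition wR (r s : Z) : R :=
  if andb (0 <=? r)%Z (0 <=? s)%Z then 1 else if andb (r <? 0)%Z (s <? 0)%Z then -1 else 0.

Lemma term_eq tau N a b r s :
  hecke_term 1 (1 + Z.of_nat N) 1 (qpow tau a) (qpow tau b) (qpow tau 1) r s = T tau N a b r s.
Proof.
  unfold hecke_term, T. rewrite Czpow_m1, !Czpow_qpow, <- !qpow_add. f_equal. f_equal.
  unfold Eexp. rewrite !plus_IZR, !mult_IZR, !tri_IZR, plus_IZR, <- INR_IZR_INZ. ring.
Qed.

Lemma Clim_ext u v : (forall M, u M = v M) -> Clim u = Clim v.
Proof.
  intros H. unfold Clim. rewrite (Lim_seq_ext (fun n => fst (u n)) (fun n => fst (v n))) by (intros; rewrite H; reflexivity).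
  rewrite (Lim_seq_ext (fun n => snd (u n)) (fun n => snd (v n))) by (intros; rewrite H; reflexivity).
  reflexivity.
Qed.

Lemma Csum_app n m u : Csum (n + m) u = Cplus (Csum n u) (Csum m (fun k => u (n + k)%nat)).
Proof.
  induction m.
  - rewrite Nat.add_0_r. simpl. ring.
  - replace (n + S m)%nat with (S (n + m)) by lia. simpl. rewrite IHm. ring.
Qed.

Lemma zsum_split M f : zsum (- Z.of_nat M) (2 * M) f =
  Cplus (Csum M (fun k => f (- Z.of_nat k - 1)%Z)) (Csum M (fun k => f (Z.of_nat k))).
Proof.
  unfold zsum. replace (2 * M)%nat with (M + M)%nat by lia. rewrite Csum_app. f_equal.
  - rewrite <- Csum_rev. apply Csum_ext. intros k Hk. f_equal. rewrite Nat2Z.inj_sub by lia.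
    rewrite Nat2Z.inj_sub by lia. simpl. lia.
  - apply Csum_ext. intros k Hk. f_equal. lia.
Qed.

Lemma Csum_zero n u : (forall k, u k = RtoC 0) -> Csum n u = RtoC 0.
Proof. intros H. induction n; simpl; [reflexivity|]. rewrite IHn, H. ring. Qed.

Lemma Csum_opp n u : Csum n (fun k => Copp (u k)) = Copp (Csum n u).
Proof. induction n; simpl; [ring|]. rewrite IHn. ring. Qed.

Lemma hecke_eq tau N a b :
  hecke_f 1 (1 + Z.of_nat N) 1 (qpow tau a) (qpow tau b) (qpow tau 1) = Clim (fun M => sq M (Wf tau N a b wR)).
Proof.
  unfold hecke_f. apply Clim_ext. intros M. unfold sq.
  rewrite zsum_split.
  assert (E1 : Csum M (fun k => zsum (- Z.of_nat M) (2 * M) (fun s => Wf tau N a b wR (- Z.of_nat k - 1)%Z s))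
     = Copp (Csum M (fun k => Csum M (fun j => T tau N a b (- Z.of_nat k - 1)%Z (- Z.of_nat j - 1)%Z)))).
  { rewrite <- Csum_opp. apply Csum_ext. intros k _. rewrite zsum_split.
      rewrite (Csum_zero M (fun j => Wf _ _ _ _ _ _ (Z.of_nat j))).
      2:{ intros j. unfold Wf, wR. destruct (Z.leb_spec 0 (- Z.of_nat k - 1)); [lia|].
          destruct (Z.ltb_spec (Z.of_nat j) 0); [lia|]. rewrite Bool.andb_false_r. simpl. ring. }
      rewrite <- Csum_opp. rewrite Cplus_0_r. apply Csum_ext. intros j _.
      unfold Wf, wR. destruct (Z.leb_spec 0 (- Z.of_nat k - 1)); [lia|].
      destruct (Z.ltb_spec (- Z.of_nat k - 1) 0); [|lia]. destruct (Z.ltb_spec (- Z.of_nat j - 1) 0); [|lia].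
      simpl. ring. }
  assert (E2 : Csum M (fun k => zsum (- Z.of_nat M) (2 * M) (fun s => Wf tau N a b wR (Z.of_nat k) s))
     = Csum M (fun k => Csum M (fun j => T tau N a b (Z.of_nat k) (Z.of_nat j)))).
  { apply Csum_ext. intros k _. rewrite zsum_split.
      rewrite (Csum_zero M (fun j => Wf _ _ _ _ _ (Z.of_nat k) _)).
      2:{ intros j. unfold Wf, wR. destruct (Z.leb_spec 0 (Z.of_nat k)); [|lia].
          destruct (Z.leb_spec 0 (- Z.of_nat j - 1)); [lia|]. destruct (Z.ltb_spec (Z.of_nat k) 0); [lia|].
          simpl. ring. }
      rewrite Cplus_0_l. apply Csum_ext. intros j _.
      unfold Wf, wR. destruct (Z.leb_spec 0 (Z.of_nat k)); [|lia]. destruct (Z.leb_spec 0 (Z.of_nat j)); [|lia].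
      simpl. ring. }
  rewrite E1, E2.
  unfold Cminus. rewrite Cplus_comm. f_equal.
  - f_equal. apply Csum_ext; intros; apply Csum_ext; intros.
    rewrite <- term_eq. f_equal; lia.
  - apply Csum_ext; intros; apply Csum_ext; intros. apply term_eq.
Qed.


Lemma Cmod_sg k : Cmod (sg k) = 1.
Proof. unfold sg. destruct (Z.even k); rewrite Cmod_R; [apply Rabs_R1|apply Rabs_m1]. Qed.

Lemma Cmod_T tau N a b r s : Cmod (T tau N a b r s) = exp (- lamq tau * Eexp N a b r s).
Proof. unfold T. rewrite Cmod_mult, Cmod_sg, Cmod_qpow, Rmult_1_l. unfold lamq. f_equal. ring. Qed.

Definition Cq (a : R) := ((a - 3/2) ^ 2 + (a + 1/2) ^ 2) / 2.

Lemma quad a x : Rabs x - Cq a <= x * (x - 1) / 2 + a * x.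
Proof.
  unfold Cq. pose proof (pow2_ge_0 (x + a - 3/2)). pose proof (pow2_ge_0 (x + a + 1/2)).
  pose proof (pow2_ge_0 (a - 3/2)). pose proof (pow2_ge_0 (a + 1/2)).
  destruct (Rle_or_lt 0 x).
  - rewrite Rabs_pos_eq by lra. nra.
  - rewrite Rabs_left by lra. nra.
Qed.

Lemma dec_Wf tau N a b v : 0 < snd tau -> (forall r s, Rabs (v r s) <= 1) ->
  (exists C, forall r s, v r s <> 0 -> Rabs (IZR r) + Rabs (IZR s) - C <= Eexp N a b r s) ->
  dec (lamq tau) (Wf tau N a b v).
Proof.
  intros Ht Hv [C HC]. assert (Hl : 0 < lamq tau) by (unfold lamq; pose proof PI_RGT_0; nra).
  exists (exp (lamq tau * C)). intros r s. unfold Wf. rewrite Cmod_mult, Cmod_R, Cmod_T.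
  destruct (Req_dec (v r s) 0) as [E|E].
  - rewrite E, Rabs_R0, Rmult_0_l. apply Rmult_le_pos; left; apply exp_pos.
  - specialize (HC r s E). specialize (Hv r s).
    rewrite <- exp_plus. apply Rle_trans with (1 * exp (- lamq tau * Eexp N a b r s)).
    + apply Rmult_le_compat_r; [left; apply exp_pos| exact Hv].
    + rewrite Rmult_1_l. apply exp_mono. nra.
Qed.

Lemma wR_bound r s : Rabs (wR r s) <= 1.
Proof. unfold wR. destruct (_ && _)%bool; [|destruct (_ && _)%bool]; rewrite ?Rabs_R1, ?Rabs_R0, ?Rabs_m1; lra. Qed.

Lemma bound_Q N a b : exists C, forall r s, wR r s <> 0 -> Rabs (IZR r) + Rabs (IZR s) - C <= Eexp N a b r s.
Proof.
  exists (Cq a + Cq b). intros r s Hw.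
  assert (Hrs : 0 <= IZR r * IZR s).
  { unfold wR in Hw. destruct (Z.leb_spec 0 r), (Z.leb_spec 0 s); simpl in Hw;
      try (apply Rmult_le_pos; apply IZR_le; lia).
    all: destruct (Z.ltb_spec r 0), (Z.ltb_spec s 0); simpl in Hw; try lra.
    all: try lia.
    replace (IZR r * IZR s) with ((- IZR r) * (- IZR s)) by ring.
    apply Rmult_le_pos; rewrite <- opp_IZR; apply IZR_le; lia. }
  pose proof (quad a (IZR r)). pose proof (quad b (IZR s)). pose proof (pos_INR N).
  assert (0 <= (INR N + 1) * IZR r * IZR s) by (rewrite Rmult_assoc; apply Rmult_le_pos; lra).
  unfold Eexp. lra.
Qed.

Definition ind0 (r s : Z) : R := if Z.eqb r 0 then 1 else 0.
Definition indm1 (r s : Z) : R := if Z.eqb s (-1) then 1 else 0.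

Lemma ind0_bound r s : Rabs (ind0 r s) <= 1.
Proof. unfold ind0. destruct (Z.eqb r 0); rewrite ?Rabs_R1, ?Rabs_R0; lra. Qed.
Lemma indm1_bound r s : Rabs (indm1 r s) <= 1.
Proof. unfold indm1. destruct (Z.eqb s (-1)); rewrite ?Rabs_R1, ?Rabs_R0; lra. Qed.

Lemma bound_L0 N a b : exists C, forall r s, ind0 r s <> 0 -> Rabs (IZR r) + Rabs (IZR s) - C <= Eexp N a b r s.
Proof.
  exists (Cq b). intros r s Hw. unfold ind0 in Hw. destruct (Z.eqb_spec r 0); [subst|lra].
  pose proof (quad b (IZR s)). unfold Eexp. rewrite Rabs_R0. lra.
Qed.

Lemma bound_L1 N a b : exists C, forall r s, indm1 r s <> 0 -> Rabs (IZR r) + Rabs (IZR s) - C <= Eexp N a b r s.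
Proof.
  exists (Cq (a - INR N - 1) + Rabs b). intros r s Hw. unfold indm1 in Hw. destruct (Z.eqb_spec s (-1)); [subst|lra].
  pose proof (quad (a - INR N - 1) (IZR r)). pose proof (Rle_abs b). unfold Eexp.
  replace (Rabs (IZR (-1))) with 1 by (rewrite Rabs_left; [simpl; lra| apply IZR_lt; lia]).
  replace (IZR (-1)) with (-1) by reflexivity. lra.
Qed.

Lemma sg_anti x y : Z.even (x + y) = false -> sg x = Copp (sg y).
Proof.
  unfold sg. rewrite Z.even_add. destruct (Z.even x), (Z.even y); simpl; intros H; try discriminate;
  unfold Copp, RtoC; simpl; f_equal; ring.
Qed.

Lemma sg_eq x y : x = y -> sg x = sg y.
Proof. intros ->; reflexivity. Qed.

Ltac izr := repeat (rewrite ?plus_IZR, ?minus_IZR, ?mult_IZR, ?opp_IZR).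


Lemma lam_pos tau : 0 < snd tau -> 0 < lamq tau.
Proof. intros. unfold lamq. pose proof PI_RGT_0. nra. Qed.

Lemma key2 tau N a b : 0 < snd tau -> (exists k, a - INR N = IZR k) -> (exists k, b = IZR k) ->
  Ccv0 (fun M => Cminus (sq M (Wf tau N a b wR))
     (Cmult (qpow tau (a - b - INR N)) (sq M (Wf tau N (INR N + b) (a - INR N) wR)))).
Proof.
  intros Ht [k1 Hk1] [k2 Hk2].
  set (a' := INR N + b). set (b' := a - INR N). set (c := qpow tau (a - b - INR N)).
  set (H := Wf tau N a' b' (fun r s => wR (s + 1)%Z (r - 1)%Z)).
  set (W' := Wf tau N a' b' wR). set (A := Wf tau N a' b' ind0). set (B := Wf tau N a' b' indm1).
  assert (Hl := lam_pos tau Ht).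
  assert (dW' : dec (lamq tau) W') by (apply dec_Wf; [exact Ht|apply wR_bound|apply bound_Q]).
  assert (dA : dec (lamq tau) A) by (apply dec_Wf; [exact Ht|apply ind0_bound|apply bound_L0]).
  assert (dB : dec (lamq tau) B) by (apply dec_Wf; [exact Ht|apply indm1_bound|apply bound_L1]).
  assert (HH : forall r s, H r s = Cplus (Cminus (W' r s) (A r s)) (B r s)).
  { intros r s. unfold H, W', A, B, Wf.
    assert (E : wR (s + 1)%Z (r - 1)%Z = wR r s - ind0 r s + indm1 r s).
    { unfold wR, ind0, indm1.
      destruct (Z.leb_spec 0 (s+1)), (Z.leb_spec 0 (r-1)), (Z.ltb_spec (s+1) 0), (Z.ltb_spec (r-1) 0),
        (Z.leb_spec 0 r), (Z.leb_spec 0 s), (Z.ltb_spec r 0), (Z.ltb_spec s 0),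
        (Z.eqb_spec r 0), (Z.eqb_spec s (-1)); simpl; try lia; lra. }
    rewrite E. rewrite !RtoC_plus, RtoC_minus. ring. }
  assert (dH : dec (lamq tau) H).
  { eapply dec_ext; [intros r s; symmetry; apply HH|].
    apply dec_plus; [|exact dB]. eapply dec_ext; [intros r s; unfold Cminus; reflexivity|].
    apply dec_plus; [exact dW'|].
    eapply dec_ext; [|apply (dec_scal _ (RtoC (-1)) _ dA)]. intros; simpl; ring. }
  assert (Step1 : forall M, sq M (Wf tau N a b wR) = Cmult c (sq M (fun r s => H (r + 1)%Z (s + -1)%Z))).
  { intros M. rewrite <- sq_scal.
    transitivity (sq M (fun r s => Cmult c (H (s + 1)%Z (r + -1)%Z))).
    - apply sq_ext. intros r s. unfold H, Wf, T, c.
      replace (r + -1 + 1)%Z with r by lia. replace (s + 1 - 1)%Z with s by lia.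
      rewrite (sg_eq (s + 1 + (r + -1)) (r + s)) by lia.
      assert (E : qpow tau (Eexp N a b r s) = Cmult (qpow tau (a - b - INR N)) (qpow tau (Eexp N a' b' (s + 1) (r + -1)))).
      { rewrite <- qpow_add. f_equal. unfold Eexp, a', b'. izr. field. }
      rewrite E. ring.
    - exact (sq_swap M (fun r s => Cmult c (H (r + 1)%Z (s + -1)%Z))). }
  assert (EA : Ccv0 (fun M => sq M A)).
  { apply (theta_s (lamq tau) (1 - 2 * k1)%Z); [exact Hl|exact dA|].
    intros r s. unfold A, Wf, ind0. destruct (Z.eqb_spec r 0); [subst r|simpl; ring].
    unfold T. rewrite (sg_anti (0 + (1 - 2 * k1 - s)) (0 + s)).
    2:{ replace (0 + (1 - 2 * k1 - s) + (0 + s))%Z with (2 * (- k1) + 1)%Z by ring. apply Z.even_odd. }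
    replace (Eexp N a' b' 0 (1 - 2 * k1 - s)) with (Eexp N a' b' 0 s).
    - ring.
    - unfold Eexp, b'. izr. rewrite Hk1. field. }
  assert (EB : Ccv0 (fun M => sq M B)).
  { apply (theta_r (lamq tau) (3 - 2 * k2)%Z); [exact Hl|exact dB|].
    intros r s. unfold B, Wf, indm1. destruct (Z.eqb_spec s (-1)); [subst s|simpl; ring].
    unfold T. rewrite (sg_anti (3 - 2 * k2 - r + -1) (r + -1)).
    2:{ replace (3 - 2 * k2 - r + -1 + (r + -1))%Z with (2 * (- k2) + 1)%Z by ring. apply Z.even_odd. }
    replace (Eexp N a' b' (3 - 2 * k2 - r) (-1)) with (Eexp N a' b' r (-1)).
    - ring.
    - unfold Eexp, a'. izr. rewrite Hk2. field. }
  assert (ET := transl (lamq tau) 1 (-1) H Hl dH).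
  apply (Ccv0_ext (fun M => Cmult c (Cplus (Cminus (Cminus (sq M (fun r s => H (r + 1)%Z (s + -1)%Z)) (sq M H))
                                            (sq M A)) (sq M B)))).
  - intros M. rewrite Step1. rewrite (sq_ext M H _ HH). rewrite sq_plus, sq_minus. fold W'. ring.
  - apply Ccv0_scal. apply Ccv0_plus; [apply Ccv0_minus|]; assumption.
Qed.


Lemma key3 tau N a b : 0 < snd tau -> (exists k, b = IZR k) ->
  Ccv0 (fun M => Cminus (sq M (Wf tau N a b wR))
     (Cmult (qpow tau (1 - b)) (sq M (Wf tau N (INR N + 2 - a) (2 - b) wR)))).
Proof.
  intros Ht [k Hk].
  set (a' := INR N + 2 - a). set (b' := 2 - b). set (c := qpow tau (1 - b)).
  set (H := Wf tau N a' b' (fun r s => - wR (- r)%Z (- s - 1)%Z)).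
  set (W' := Wf tau N a' b' wR). set (A := Wf tau N a' b' ind0).
  assert (Hl := lam_pos tau Ht).
  assert (dW' : dec (lamq tau) W') by (apply dec_Wf; [exact Ht|apply wR_bound|apply bound_Q]).
  assert (dA : dec (lamq tau) A) by (apply dec_Wf; [exact Ht|apply ind0_bound|apply bound_L0]).
  assert (HH : forall r s, H r s = Cminus (W' r s) (A r s)).
  { intros r s. unfold H, W', A, Wf.
    assert (E : - wR (- r)%Z (- s - 1)%Z = wR r s - ind0 r s).
    { unfold wR, ind0.
      destruct (Z.leb_spec 0 (-r)), (Z.leb_spec 0 (-s-1)), (Z.ltb_spec (-r) 0), (Z.ltb_spec (-s-1) 0),
        (Z.leb_spec 0 r), (Z.leb_spec 0 s), (Z.ltb_spec r 0), (Z.ltb_spec s 0),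
        (Z.eqb_spec r 0); simpl; try lia; lra. }
    rewrite E. rewrite RtoC_minus. ring. }
  assert (dH : dec (lamq tau) H).
  { eapply dec_ext; [intros r s; symmetry; apply HH|].
    eapply dec_ext; [intros r s; unfold Cminus; reflexivity|].
    apply dec_plus; [exact dW'|].
    eapply dec_ext; [|apply (dec_scal _ (RtoC (-1)) _ dA)]. intros; simpl; ring. }
  assert (Step1 : forall M, sq M (Wf tau N a b wR) = Cmult c (sq M (fun r s => H (r + 1)%Z (s + 0)%Z))).
  { intros M. rewrite <- sq_scal.
    transitivity (sq M (fun r s => Cmult c (H (0 - r)%Z (-1 - s)%Z))).
    - apply sq_ext. intros r s. unfold H, Wf, T, c.
      replace (- (0 - r))%Z with r by lia. replace (- (-1 - s) - 1)%Z with s by lia.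
      rewrite (sg_anti (0 - r + (-1 - s)) (r + s)).
      2:{ replace (0 - r + (-1 - s) + (r + s))%Z with (2 * (-1) + 1)%Z by ring. apply Z.even_odd. }
      assert (E : qpow tau (Eexp N a b r s) = Cmult (qpow tau (1 - b)) (qpow tau (Eexp N a' b' (0 - r) (-1 - s)))).
      { rewrite <- qpow_add. f_equal. unfold Eexp, a', b'. izr. field. }
      rewrite E. rewrite RtoC_opp. ring.
    - rewrite (sq_reflr M 0 (fun r s => Cmult c (H r (-1 - s)%Z))).
      rewrite (sq_refls M (-1) (fun r s => Cmult c (H (r + (0 + 1))%Z s))).
      apply sq_ext. intros r s. do 2 f_equal; lia. }
  assert (EA : Ccv0 (fun M => sq M A)).
  { apply (theta_s (lamq tau) (1 - 2 * (2 - k))%Z); [exact Hl|exact dA|].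
    intros r s. unfold A, Wf, ind0. destruct (Z.eqb_spec r 0); [subst r|simpl; ring].
    unfold T. rewrite (sg_anti (0 + (1 - 2 * (2 - k) - s)) (0 + s)).
    2:{ replace (0 + (1 - 2 * (2 - k) - s) + (0 + s))%Z with (2 * (k - 2) + 1)%Z by ring. apply Z.even_odd. }
    replace (Eexp N a' b' 0 (1 - 2 * (2 - k) - s)) with (Eexp N a' b' 0 s).
    - ring.
    - unfold Eexp, b'. izr. rewrite Hk. field. }
  assert (ET := transl (lamq tau) 1 0 H Hl dH).
  apply (Ccv0_ext (fun M => Cmult c (Cminus (Cminus (sq M (fun r s => H (r + 1)%Z (s + 0)%Z)) (sq M H))
                                            (sq M A)))).
  - intros M. rewrite Step1. rewrite (sq_ext M H _ HH). rewrite sq_minus. fold W'. ring.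
  - apply Ccv0_scal. apply Ccv0_minus; assumption.
Qed.

Lemma key1 tau N a b M : sq M (Wf tau N b a wR) = sq M (Wf tau N a b wR).
Proof.
  rewrite <- sq_swap. apply sq_ext. intros r s. unfold Wf, T.
  assert (wR s r = wR r s).
  { unfold wR. destruct (Z.leb_spec 0 r), (Z.leb_spec 0 s), (Z.ltb_spec r 0), (Z.ltb_spec s 0); simpl; lra || lia. }
  rewrite H. rewrite (sg_eq (s + r) (r + s)) by lia.
  replace (Eexp N b a s r) with (Eexp N a b r s) by (unfold Eexp; field). reflexivity.
Qed.


Lemma Clim_key tau N a b a' b' c : 0 < snd tau ->
  Ccv0 (fun M => Cminus (sq M (Wf tau N a b wR)) (Cmult c (sq M (Wf tau N a' b' wR)))) ->
  Clim (fun M => sq M (Wf tau N a b wR)) = Cmult c (Clim (fun M => sq M (Wf tau N a' b' wR))).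
Proof.
  intros Ht H0. assert (Hl := lam_pos tau Ht).
  assert (dW : dec (lamq tau) (Wf tau N a' b' wR)) by (apply dec_Wf; [exact Ht|apply wR_bound|apply bound_Q]).
  destruct (sq_conv _ _ Hl dW) as [l Hcv].
  rewrite (Clim_Ccv _ _ Hcv). apply Clim_Ccv. apply (Ccv_comb _ (fun M => sq M (Wf tau N a' b' wR)) _ l); assumption.
Qed.

Theorem mainTheorem5 (N : nat) (m l : Z) (tau : C) :
  (0 < N)%nat -> Z.Even (m - l) -> 0 < snd tau ->
  S_fun N m l tau = S_fun N (- m) l tau /\
  S_fun N m l tau = S_fun N (2 * Z.of_nat N - m) l tau /\
  S_fun N m l tau = S_fun N (Z.of_nat N - m) (Z.of_nat N - l) tau.
Proof.
  intros HN [j Hj] Ht.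
  assert (HNr : 0 < INR N) by (apply lt_0_INR; exact HN).
  assert (Em : IZR m = IZR l + 2 * IZR j) by (replace m with (l + 2 * j)%Z by lia; izr; ring).
  unfold S_fun. rewrite !hecke_eq.
  set (a := 1 + (IZR m + IZR l) / 2). set (b := 1 - (IZR m - IZR l) / 2).
  set (J := Cpow (J1 tau) 3).
  split; [|split].
  - replace (1 + (IZR (- m) + IZR l) / 2) with b by (unfold b; rewrite opp_IZR; field).
    replace (1 - (IZR (- m) - IZR l) / 2) with a by (unfold a; rewrite opp_IZR; field).
    rewrite (Clim_ext _ _ (key1 tau N a b)).
    replace (IZR (- m) ^ 2) with (IZR m ^ 2) by (rewrite opp_IZR; ring). reflexivity.
  - replace (1 + (IZR (2 * Z.of_nat N - m) + IZR l) / 2) with (INR N + b)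
      by (unfold b; izr; rewrite <- INR_IZR_INZ; field).
    replace (1 - (IZR (2 * Z.of_nat N - m) - IZR l) / 2) with (a - INR N)
      by (unfold a; izr; rewrite <- INR_IZR_INZ; field).
    rewrite (Clim_key tau N a b (INR N + b) (a - INR N) (qpow tau (a - b - INR N)) Ht).
    2:{ apply key2; [exact Ht| |].
        - exists (1 + l + j - Z.of_nat N)%Z. unfold a. izr. rewrite <- INR_IZR_INZ. rewrite Em. field.
        - exists (1 - j)%Z. unfold b. izr. rewrite Em. field. }
    unfold Cdiv. rewrite Cmult_assoc. f_equal. rewrite Cmult_comm, Cmult_assoc. f_equal.
    rewrite <- qpow_add. f_equal. unfold a, b. izr. rewrite <- INR_IZR_INZ. field. lra.
  - replace (1 + (IZR (Z.of_nat N - m) + IZR (Z.of_nat N - l)) / 2) with (INR N + 2 - a)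
      by (unfold a; izr; rewrite <- INR_IZR_INZ; field).
    replace (1 - (IZR (Z.of_nat N - m) - IZR (Z.of_nat N - l)) / 2) with (2 - b)
      by (unfold b; izr; field).
    rewrite (Clim_key tau N a b (INR N + 2 - a) (2 - b) (qpow tau (1 - b)) Ht).
    2:{ apply key3; [exact Ht|]. exists (1 - j)%Z. unfold b. izr. rewrite Em. field. }
    unfold Cdiv. rewrite Cmult_assoc. f_equal. rewrite Cmult_comm, Cmult_assoc. f_equal.
    rewrite <- qpow_add. f_equal. unfold b. izr. rewrite <- INR_IZR_INZ. field. lra.
Qed.
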